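(* Let $N$ be a Poisson process on $[0,\infty)$ with intensity $\lambda>0$, with points $0<X_1<X_2<\cdots$, and for $\epsilon>0$ let $\beta_0(x)=\beta_0^{(\epsilon)}(x)$ be the number of complete clusters in $[0,x]$ for connection threshold $\epsilon$. Let $m$ be a positive integer and $x>0$. Then $\mathbb{E}[\beta_0(x)^m]\to\mathbb{E}[N_x^m]$ as $\epsilon\to0$.
   Context: $N_x=\#\{n\ge1:X_n\le x\}$. A cluster (for threshold $\epsilon$) is a maximal set of consecutive points $X_j,\dots,X_k$ with $X_{l+1}-X_l\le\epsilon$ for $j\le l<k$; its end is $X_k+\epsilon$. $\beta_0(x)$ is the number of clusters whose end is $\le x$. *)

(* Defs.v *)
From HB Require Import structures.
From mathcomp Require Import all_boot all_order all_algebra.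
From mathcomp Require Import all_classical all_reals all_analysis.
Set Implicit Arguments. Unset Strict Implicit. Unset Printing Implicit Defensive.
Import Order.TTheory GRing.Theory Num.Theory.
Import numFieldNormedType.Exports.
Local Open Scope classical_set_scope.
Local Open Scope ring_scope.

Section poisson_defs.
Context {d : measure_display} {T : measurableType d} {R : realType}.

(* Points are 0-indexed: [X n] is the paper's X_{n+1}. *)

Definition gap (X : nat -> T -> R) (n : nat) (w : T) : R :=
  if n is k.+1 then X k.+1 w - X k w else X 0%N w.

Definition mutually_independent (P : probability T R) (Y : nat -> T -> R) :=
  forall (s : seq nat) (B : nat -> set R), uniq s ->
    (forall i, measurable (B i)) ->
    P (\big[setI/setT]_(i <- s) (Y i @^-1` B i)) =
    (\prod_(i <- s) P (Y i @^-1` B i))%E.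

(* X is (the sequence of points of) a homogeneous Poisson process on [0,oo)
   with intensity lam: the inter-arrival times are i.i.d. Exp(lam). *)
Definition poisson_process (P : probability T R) (lam : R) (X : nat -> T -> R) :=
  [/\ forall n, measurable_fun setT (X n),
      mutually_independent P (gap X) &
      forall n (A : set R), measurable A ->
        P (gap X n @^-1` A) = exponential_prob lam A].

Definition count_pts (X : nat -> T -> R) (x : R) (w : T) : \bar R :=
  (\sum_(0 <= n <oo) (((X n w <= x)%R)%:R)%:E)%E.

(* beta_0(x): number of clusters (threshold eps) whose end is <= x.
   Each cluster is identified by its last point X_k, characterised by
   X_{k+1} - X_k > eps; its end is X_k + eps. *)
Definition beta0 (eps : R) (X : nat -> T -> R) (x : R) (w : T) : \bar R :=
  (\sum_(0 <= n <oo) ((((eps < X n.+1 w - X n w) && (X n w + eps <= x))%R)%:R)%:E)%E.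

End poisson_defs.

(* Main.v *)
Require Import Defs.
From HB Require Import structures.
From mathcomp Require Import all_boot all_order all_algebra.
From mathcomp Require Import all_classical all_reals all_analysis.
Import Order.TTheory GRing.Theory Num.Theory.
Import numFieldNormedType.Exports.
Local Open Scope classical_set_scope.
Local Open Scope ring_scope.
From mathcomp Require Import measurable_realfun exponential_distribution lra ring.
Set Implicit Arguments. Unset Strict Implicit. Unset Printing Implicit Defensive.
Local Open Scope ereal_scope.

Lemma expe_le (R : realType) (a b : \bar R) n : 0 <= a -> a <= b -> a ^+ n <= b ^+ n.
Proof.
move=> a0 ab; elim: n => [|n IH]; first by rewrite !expe0.
rewrite !expeS lee_pmul//; exact: expe_ge0.
Qed.

Lemma beta0_ge0 d (T : measurableType d) (R : realType) eps (X : nat -> T -> R) x w :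
  0 <= beta0 eps X x w.
Proof. by apply: nneseries_ge0 => n _; rewrite lee_fin. Qed.

Lemma count_ge0 d (T : measurableType d) (R : realType) (X : nat -> T -> R) x w :
  0 <= count_pts X x w.
Proof. by apply: nneseries_ge0 => n _; rewrite lee_fin. Qed.

Lemma beta0_le_count d (T : measurableType d) (R : realType) (eps : R) (X : nat -> T -> R) x w :
  (0 < eps)%R -> beta0 eps X x w <= count_pts X x w.
Proof.
move=> e0; apply: lee_nneseries => n _; first by rewrite lee_fin.
rewrite lee_fin ler_nat; set b := (_ && _); set c := (_ <= _)%R.
have : b -> c by move=> /andP[_ h]; rewrite /c; apply: le_trans h; rewrite lerDl ltW.
by case: b; case: c => // /(_ isT).
Qed.

Lemma beta0_anti d (T : measurableType d) (R : realType) (e1 e2 : R) (X : nat -> T -> R) x w :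
  (e1 <= e2)%R -> beta0 e2 X x w <= beta0 e1 X x w.
Proof.
move=> e12; apply: lee_nneseries => n _; first by rewrite lee_fin.
rewrite lee_fin ler_nat; set b := (_ && _); set c := (_ && _).
have : b -> c.
  move=> /andP[h1 h2]; rewrite /c (le_lt_trans e12 h1) /=.
  by apply: le_trans h2; rewrite lerD2l.
by case: b; case: c => // /(_ isT).
Qed.

Lemma nd_le_lim (R : realType) (u : (\bar R)^nat) (l : \bar R) n :
  nondecreasing_seq u -> u @ \oo --> l -> u n <= l.
Proof.
move=> nd ul; apply: (cvge_ge _ ul); exists n => // k /= nk; exact: nd.
Qed.

Lemma nd_cvg_expe (R : realType) (u : (\bar R)^nat) (l : \bar R) m :
  (forall n, 0 <= u n) -> nondecreasing_seq u -> u @ \oo --> l ->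
  (fun n => u n ^+ m) @ \oo --> l ^+ m.
Proof.
move=> u0 nd ul.
have l0 : 0 <= l by apply: (le_trans (u0 0%N)); exact: (nd_le_lim 0%N nd ul).
have [l00|lneq0] := eqVneq l 0.
  subst l.
  have uE : (fun n => u n ^+ m) = (fun=> 0 ^+ m).
    apply/funext => n; congr (_ ^+ _); apply/eqP; rewrite eq_le u0 andbT.
    exact: nd_le_lim n nd ul.
  by rewrite uE; exact: cvg_cst.
have lgt0 : 0 < l by rewrite lt0e lneq0.
elim: m => [|m IH].
  rewrite (_ : (fun n => u n ^+ 0) = (fun=> 1)); last by apply/funext => n; rewrite expe0.
  by rewrite expe0; exact: cvg_cst.
rewrite (_ : (fun n => u n ^+ m.+1) = u \* (fun n => u n ^+ m)); last first.
  by apply/funext => n; rewrite expeS.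
rewrite expeS; apply: cvgeM => //; apply: neq0_mule_def.
by rewrite gt_eqF// mule_gt0// expe_gt0.
Qed.

Definition epsk (R : realType) (k : nat) : R := ((k.+1)%:R)^-1.

Lemma epsk_gt0 (R : realType) k : (0 < epsk R k)%R.
Proof. by rewrite /epsk invr_gt0 ltr0n. Qed.

Lemma epsk_anti (R : realType) k k' : (k <= k')%N -> (epsk R k' <= epsk R k)%R.
Proof.
move=> kk; rewrite /epsk lef_pV2 ?posrE ?ltr0n// ler_nat; exact: kk.
Qed.

Lemma epsk_small (R : realType) (del : R) : (0 < del)%R ->
  \forall k \near \oo, (epsk R k < del)%R.
Proof.
move=> d0; exists (Num.truncn (del^-1)) => // k /= Kk.
rewrite /epsk -[ltRHS]invrK ltf_pV2 ?posrE ?ltr0n ?invr_gt0//.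
have id0 : (0 < del^-1)%R by rewrite invr_gt0.
have /andP[_ h] := Num.Theory.truncn_itv (ltW id0).
apply: lt_le_trans h _; rewrite ler_nat ltnS; exact: Kk.
Qed.

Lemma term_ev d (T : measurableType d) (R : realType) (X : nat -> T -> R) x w n :
  (0 < X n.+1 w - X n w)%R -> X n w != x ->
  \forall k \near \oo,
    ((((X n w <= x)%R)%:R)%:E : \bar R) <=
    (((((epsk R k < X n.+1 w - X n w)%R && (X n w + epsk R k <= x)%R))%:R)%:E).
Proof.
move=> g0 nx.
have [xl|xl] := boolP (X n w <= x)%R; last first.
  by apply: nearW => k; rewrite lee_fin; case: (_ && _).
have xlt : (X n w < x)%R by rewrite lt_neqAle nx.
have del0 : (0 < Num.min (X n.+1 w - X n w) (x - X n w))%R.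
  by rewrite lt_min g0 subr_gt0 xlt.
near=> k.
have ek : (epsk R k < Num.min (X n.+1 w - X n w) (x - X n w))%R.
  by near: k; exact: epsk_small.
move: ek; rewrite lt_min => /andP[e1 e2].
rewrite e1 /= -lerBrDl (ltW e2); by rewrite lee_fin.
Unshelve. all: by end_near.
Qed.

Lemma beta0_cvg_good d (T : measurableType d) (R : realType) (X : nat -> T -> R) x w :
  (forall n, 0 < X n.+1 w - X n w)%R -> (forall n, X n w != x) ->
  (fun k => beta0 (epsk R k) X x w) @ \oo --> count_pts X x w.
Proof.
move=> gp nx.
set L := fun k => beta0 (epsk R k) X x w.
have ndL : nondecreasing_seq L.
  by move=> i j ij; apply: beta0_anti; exact: epsk_anti.
have cL := ereal_nondecreasing_is_cvgn ndL.
suff <- : lim (L @ \oo) = count_pts X x w by exact: cL.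
apply/eqP; rewrite eq_le; apply/andP; split.
  by apply: lime_le => //; apply: nearW => k; apply: beta0_le_count; exact: epsk_gt0.
have claim N : \forall k \near \oo,
    \sum_(0 <= n < N) ((((X n w <= x)%R)%:R)%:E : \bar R) <=
    \sum_(0 <= n < N) (((((epsk R k < X n.+1 w - X n w)%R && (X n w + epsk R k <= x)%R))%:R)%:E).
  elim: N => [|N IH]; first by apply: nearW => k; rewrite !big_geq.
  near=> k; rewrite !big_nat_recr//=; apply: leeD.
    by near: k; exact: IH.
  by near: k; exact: term_ev.
apply: lime_le; first by apply: is_cvg_nneseries => n _; rewrite lee_fin.
apply: nearW => N.
have [k _ /(_ k (leqnn k)) hk] := claim N.
apply: (le_trans hk); apply: (le_trans _ (nd_le_lim k ndL cL)).
rewrite /L /beta0; apply: nneseries_lim_ge => n _ _; by rewrite lee_fin.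
Unshelve. all: by end_near.
Qed.

Lemma exp_prob_le (R : realType) (lam : R) (A : set R) : (0 < lam)%R -> measurable A ->
  exponential_prob lam A <= lam%:E * lebesgue_measure (`[0%R, +oo[%classic `&` A).
Proof.
move=> l0 mA; rewrite /exponential_prob -integral_indic//.
rewrite -ge0_integralZl_EFin//; last exact: ltW.
apply: ge0_le_integral => //.
- by move=> y _; rewrite lee_fin exponential_pdf_ge0// ltW.
- apply/measurable_EFinP; apply: measurable_funTS.
  exact: measurable_exponential_pdf.
- apply: measurable_funTS; apply/measurable_EFinP.
  apply: measurable_funM => //; exact: measurable_indic.
- move=> y _; rewrite lee_fin indicE.
  have [y0|y0] := leP 0%R y.
    rewrite mem_set/=; last by rewrite in_itv/= y0.
    rewrite exponential_pdfE// mulr1; apply: ler_piMr; first exact: ltW.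
    rewrite expR_le1 mulNr oppr_le0; apply: mulr_ge0 => //; exact: ltW.
  rewrite lt0_exponential_pdf//; apply: mulr_ge0 => //; exact: ltW.
apply/measurable_EFinP; exact: measurable_indic.
Qed.

Lemma exp_prob_ge0 (R : realType) (lam : R) (A : set R) : (0 < lam)%R ->
  0 <= exponential_prob lam A.
Proof.
move=> l0; rewrite /exponential_prob integral_ge0// => y _.
by rewrite lee_fin exponential_pdf_ge0// ltW.
Qed.

Lemma exp_prob_itv (R : realType) (lam a b : R) : (0 < lam)%R -> (a < b)%R ->
  exponential_prob lam `[a, b] <= (lam * (b - a))%:E.
Proof.
move=> l0 ab; apply: (le_trans (exp_prob_le l0 _)) => //.
rewrite EFinM; apply: lee_wpmul2l; first by rewrite lee_fin ltW.
apply: (le_trans (le_measure _ _ _ (@subIsetr _ _ _))); rewrite ?inE//.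
  exact: measurableI.
have := lebesgue_measure_itv `[a, b]; rewrite /= lte_fin ab => ->.
by rewrite -EFinD.
Qed.

Lemma exp_prob_null (R : realType) (lam a : R) (A : set R) : (0 < lam)%R ->
  measurable A -> `[0%R, +oo[%classic `&` A `<=` [set a] ->
  exponential_prob lam A = 0.
Proof.
move=> l0 mA sA; apply/eqP; rewrite eq_le exp_prob_ge0// andbT.
apply: (le_trans (exp_prob_le l0 mA)).
have -> : lebesgue_measure (`[0%R, +oo[%classic `&` A) = 0.
  apply/eqP; rewrite eq_le measure_ge0 andbT -(lebesgue_measure_set1 a).
  by apply: le_measure => //; rewrite inE//; exact: measurableI.
by rewrite mule0.
Qed.
Definition PiS d (T : measurableType d) (R : realType) (X : nat -> T -> R) (n : nat) : set (set T) :=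
  [set E | exists B : nat -> set R, (forall i, measurable (B i)) /\
     E = \big[setI/setT]_(0 <= i < n) (gap X i @^-1` B i)].

Lemma PiS_setI d (T : measurableType d) (R : realType) (X : nat -> T -> R) n :
  setI_closed (PiS X n).
Proof.
move=> E1 E2 [B1 [mB1 ->]] [B2 [mB2 ->]].
exists (fun i => B1 i `&` B2 i); split; first by move=> i; exact: measurableI.
by rewrite -big_split/=; apply: eq_bigr => i _; rewrite preimage_setI.
Qed.

Lemma PiS_meas d (T : measurableType d) (R : realType) (X : nat -> T -> R) n :
  (forall i, measurable_fun setT (X i)) ->
  PiS X n `<=` measurable.
Proof.
move=> mX E [B [mB ->]]; apply: bigsetI_measurable => i _.
rewrite -[X in measurable X]setTI; apply: (_ : measurable_fun setT (gap X i)) => //.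
case: i => [|i] /=; first exact: mX.
exact: measurable_funB.
Qed.

Lemma PiS_one d (T : measurableType d) (R : realType) (X : nat -> T -> R) n i (Y : set R) :
  (i < n)%N -> measurable Y -> PiS X n (gap X i @^-1` Y).
Proof.
move=> iN mY; exists (fun k => if k == i then Y else setT); split.
  by move=> k; case: ifP.
elim: n iN => [//|n IH] iN.
rewrite big_nat_recr//=.
have [->|ni] := eqVneq n i.
  rewrite (_ : \big[setI/setT]_(0 <= i0 < i) _ = setT) ?setTI//.
  rewrite big_nat_cond; apply: big1 => k /andP[/andP[_ ki] _].
  by rewrite ifF ?preimage_setT// ; apply/negbTE; rewrite neq_ltn ki.
rewrite preimage_setT setIT; apply: IH.
by move: iN; rewrite ltnS leq_eqVlt eq_sym (negbTE ni).
Qed.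

Lemma PiS_indep d (T : measurableType d) (R : realType) (P : probability T R) lam
    (X : nat -> T -> R) n E (J : set R) :
  poisson_process P lam X -> PiS X n E -> measurable J ->
  P (E `&` gap X n @^-1` J) = P E * P (gap X n @^-1` J).
Proof.
move=> [mX ind _] [B [mB ->]] mJ.
pose B' := fun i => if i == n then J else B i.
have mB' : forall i, measurable (B' i) by move=> i; rewrite /B'; case: ifP.
have h1 := ind (index_iota 0 n.+1) B' (iota_uniq _ _) mB'.
have h2 := ind (index_iota 0 n) B (iota_uniq _ _) mB.
rewrite h2.
have eS : \big[setI/setT]_(0 <= i < n) (gap X i @^-1` B' i) =
          \big[setI/setT]_(0 <= i < n) (gap X i @^-1` B i).
  rewrite big_nat_cond [RHS]big_nat_cond; apply: eq_bigr => i /andP[/andP[_ h] _].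
  by rewrite /B' ifF// ltn_eqF.
have eP : \prod_(0 <= i < n) P (gap X i @^-1` B' i) =
          \prod_(0 <= i < n) P (gap X i @^-1` B i).
  rewrite big_nat_cond [RHS]big_nat_cond; apply: eq_bigr => i /andP[/andP[_ h] _].
  by rewrite /B' ifF// ltn_eqF.
move: h1; rewrite big_nat_recr//= [in X in _ = X -> _]big_nat_recr//= eS eP /B' eqxx.
by [].
Qed.

Lemma sigma_indep d (T : measurableType d) (R : realType) (P : probability T R) lam
    (X : nat -> T -> R) n (J : set R) :
  poisson_process P lam X -> measurable J ->
  forall A, <<s PiS X n>> A ->
  P (A `&` gap X n @^-1` J) = P A * P (gap X n @^-1` J).
Proof.
move=> pp mJ; have [mX _ _] := pp.
set G := gap X n @^-1` J.
have mG : measurable G.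
  rewrite /G -[X in measurable X]setTI; apply: (_ : measurable_fun setT (gap X n)) => //.
  case: n {G} => [|n] /=; first exact: mX.
  exact: measurable_funB.
set D := [set A | measurable A /\ P (A `&` G) = P A * P G].
suff sub : <<d PiS X n>> `<=` D.
  move=> A; rewrite -setI_closed_g_dynkin_g_sigma_algebra; last exact: PiS_setI.
  by move=> /sub [].
apply: smallest_sub; last first.
  move=> E PE; split; first exact: (PiS_meas mX PE).
  exact: (PiS_indep pp PE mJ).
split.
- by split => //; rewrite setTI probability_setT mul1e.
- move=> A [mA hA]; split; first exact: measurableC.
  have e : P (~` A `&` G) = P G - P (G `&` A).
    rewrite setIC -setDE measureD//.
    by rewrite (le_lt_trans (probability_le1 _ _))// ltry.
  rewrite e (setIC G A) hA.
  rewrite probability_setC// muleBl ?mul1e//.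
    by rewrite fin_num_measure.
- move=> F tF hF; split.
    by apply: bigcup_measurable => k _; exact: (hF k).1.
  have h1 : P (\bigcup_k (F k `&` G)) = \sum_(i <oo | i \in setT) P (F i `&` G).
    apply: measure_bigcup; last exact: trivIset_setIr.
    by move=> k _; apply: measurableI => //; exact: (hF k).1.
  have h2 : P (\bigcup_k F k) = \sum_(i <oo | i \in setT) P (F i).
    by apply: measure_bigcup => // k _; exact: (hF k).1.
  rewrite setI_bigcupl h1 h2.
  have PGE : P G = (fine (P G))%:E by rewrite fineK// fin_num_measure.
  rewrite [in RHS]PGE muleC -nneseriesZl//.
  by apply: eq_eseriesr => k _; rewrite (hF k).2 PGE muleC.
Qed.

Lemma X_gen d (T : measurableType d) (R : realType) (X : nat -> T -> R) n j (C : set R) :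
  (j < n)%N -> measurable C -> <<s PiS X n>> (X j @^-1` C).
Proof.
move=> jn mC.
pose T' := g_sigma_algebraType (PiS X n).
have mg i : (i < n)%N -> measurable_fun (setT : set T') (gap X i).
  move=> iN _ Y mY; rewrite setTI; apply: sub_gen_smallest; exact: PiS_one.
have mfX : forall j, (j < n)%N -> measurable_fun (setT : set T') (X j).
  elim=> [|k IH] kn; first exact: (mg 0%N kn).
  have -> : X k.+1 = (fun w => X k w + gap X k.+1 w)%R.
    by apply/funext => w /=; rewrite addrC subrK.
  apply: measurable_funD; [exact: IH (ltnW kn)|exact: mg].
have := mfX j jn measurableT C mC; rewrite setTI; exact.
Qed.

Lemma indep_Xgap d (T : measurableType d) (R : realType) (P : probability T R) lam
    (X : nat -> T -> R) n (C J : set R) :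
  poisson_process P lam X -> measurable C -> measurable J ->
  P (X n @^-1` C `&` gap X n.+1 @^-1` J) = P (X n @^-1` C) * P (gap X n.+1 @^-1` J).
Proof.
move=> pp mC mJ; apply: (sigma_indep pp mJ); exact: X_gen.
Qed.

Lemma union_bound d (T : measurableType d) (R : realType) (P : probability T R) lam
    (X : nat -> T -> R) j (I J : nat -> set R) (c : R) :
  poisson_process P lam X -> (0 <= c)%R ->
  (forall k, measurable (I k)) -> (forall k, measurable (J k)) ->
  trivIset setT I -> (forall k, exponential_prob lam (J k) <= c%:E) ->
  P (\bigcup_k (X j @^-1` I k `&` gap X j.+1 @^-1` J k)) <= c%:E.
Proof.
move=> pp c0 mI mJ tI hJ; have [mX _ hexp] := pp.
have mA k : measurable (X j @^-1` I k) by rewrite -[X in measurable X]setTI; exact: mX.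
have mG k : measurable (gap X j.+1 @^-1` J k).
  rewrite -[X in measurable X]setTI; apply: (_ : measurable_fun setT (gap X j.+1)) => //.
  exact: measurable_funB.
apply: le_trans.
  apply: (@measure_sigma_subadditive _ _ _ P _ (fun k => X j @^-1` I k `&` gap X j.+1 @^-1` J k)) => //.
    by move=> k; exact: measurableI.
  by apply: bigcup_measurable => k _; exact: measurableI.
apply: (@le_trans _ _ (\sum_(0 <= k <oo) c%:E * P (X j @^-1` I k))).
  apply: lee_nneseries => [k _ _|k _]; first exact: measure_ge0.
  have e := indep_Xgap j pp (mI k) (mJ k).
  apply: (@le_trans _ _ (P (X j @^-1` I k) * P (gap X j.+1 @^-1` J k))).
    by rewrite -e.
  rewrite muleC; apply: lee_wpmul2r; first exact: measure_ge0.
  by rewrite hexp.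
rewrite nneseriesZl; last by move=> k _; exact: measure_ge0.
have h2 : P (\bigcup_k (X j @^-1` I k)) = \sum_(i <oo | i \in setT) P (X j @^-1` I i).
  apply: measure_bigcup => //.
  by move=> a b _ _ [w [ha hb]]; apply: tI => //; exists (X j w); split.
rewrite -[X in _ <= X]mule1; apply: lee_wpmul2l; first by rewrite lee_fin.
apply: (@le_trans _ _ (P (\bigcup_k (X j @^-1` I k)))); last first.
  apply: probability_le1; exact: bigcup_measurable.
rewrite h2 le_eqVlt; apply/orP; left; apply/eqP; apply: eq_eseriesl => i; by rewrite in_setT.
Qed.

Lemma small_is0 (R : realType) (p : \bar R) (lam : R) : (0 < lam)%R -> 0 <= p -> p <= 1 ->
  (forall eta : R, (0 < eta)%R -> p <= (2 * lam * eta)%:E) -> p = 0.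
Proof.
move=> l0 p0 p1 h.
have pf : p \is a fin_num by rewrite ge0_fin_numE// (le_lt_trans p1)// ltry.
rewrite -(fineK pf); congr (_%:E); apply/eqP; rewrite eq_le.
rewrite fine_ge0// andbT.
set r := fine p; rewrite leNgt; apply/negP => r0.
have e0 : (0 < r / (4 * lam))%R by rewrite divr_gt0// mulr_gt0.
have := h _ e0; rewrite -(fineK pf) lee_fin -/r.
have -> : (2 * lam * (r / (4 * lam)) = r / 2)%R.
  by field; rewrite gt_eqF.
move=> h2; lra.
Qed.

Lemma itv_disj1 (R : realType) (eta : R) : (0 < eta)%R ->
  trivIset setT (fun k : nat => `[(k%:R * eta)%R, (k.+1%:R * eta)%R[%classic).
Proof.
move=> e0 a b _ _ [y [/= ha hb]].
move: ha hb; rewrite !in_itv/= => /andP[a1 a2] /andP[b1 b2].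
have ab : (a%:R < b.+1%:R :> R)%R.
  by rewrite -(ltr_pM2r e0); apply: le_lt_trans b2.
have ba : (b%:R < a.+1%:R :> R)%R.
  by rewrite -(ltr_pM2r e0); apply: le_lt_trans a2.
move: ab ba; rewrite !ltr_nat !ltnS => ab ba; by apply/eqP; rewrite eqn_leq ab ba.
Qed.

Lemma itv_disj2 (R : realType) (eta : R) : (0 < eta)%R ->
  trivIset setT (fun k : nat => `](- (k.+1%:R * eta))%R, (- (k%:R * eta))%R]%classic).
Proof.
move=> e0 a b _ _ [y [/= ha hb]].
move: ha hb; rewrite !in_itv/= => /andP[a1 a2] /andP[b1 b2].
have ab : (a%:R < b.+1%:R :> R)%R.
  rewrite -(ltr_pM2r e0); lra.
have ba : (b%:R < a.+1%:R :> R)%R.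
  rewrite -(ltr_pM2r e0); lra.
move: ab ba; rewrite !ltr_nat !ltnS => ab ba; by apply/eqP; rewrite eqn_leq ab ba.
Qed.

Lemma gap_meas d (T : measurableType d) (R : realType) (X : nat -> T -> R) :
  (forall n, measurable_fun setT (X n)) -> forall n, measurable_fun setT (gap X n).
Proof. by move=> mX [|n] /=; [exact: mX|exact: measurable_funB]. Qed.

Lemma pre_meas d (T : measurableType d) (R : realType) (f : T -> R) (A : set R) :
  measurable_fun setT f -> measurable A -> measurable (f @^-1` A).
Proof. by move=> mf mA; rewrite -[X in measurable X]setTI; exact: mf. Qed.

Lemma X_atomless d (T : measurableType d) (R : realType) (P : probability T R) lam
    (X : nat -> T -> R) n (x : R) :
  (0 < lam)%R -> poisson_process P lam X -> P (X n @^-1` [set x]) = 0.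
Proof.
move=> l0 pp; have [mX _ hexp] := pp.
case: n => [|j].
  have -> : X 0%N @^-1` [set x] = gap X 0 @^-1` [set x] by [].
  rewrite hexp//; apply: (exp_prob_null l0) => //; exact: subIsetr.
have mXj : measurable (X j.+1 @^-1` [set x]) by rewrite -[X in measurable X]setTI; exact: mX.
apply: (small_is0 l0); [exact: measure_ge0|exact: probability_le1|].
move=> eta e0.
pose I1 k := `[(k%:R * eta)%R, (k.+1%:R * eta)%R[%classic.
pose J1 k := `[(x - k.+1%:R * eta)%R, (x - k%:R * eta)%R]%classic.
pose I2 k := `](- (k.+1%:R * eta))%R, (- (k%:R * eta))%R]%classic.
pose J2 k := `[(x + k%:R * eta)%R, (x + k.+1%:R * eta)%R]%classic.
pose U1 := \bigcup_k (X j @^-1` I1 k `&` gap X j.+1 @^-1` J1 k).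
pose U2 := \bigcup_k (X j @^-1` I2 k `&` gap X j.+1 @^-1` J2 k).
have hJ1 k : exponential_prob lam (J1 k) <= (lam * eta)%:E.
  apply: (le_trans (exp_prob_itv l0 _)).
    by rewrite ltrD2l ltrN2 ltr_pM2r// ltr_nat.
  by rewrite lee_fin le_eqVlt; apply/orP; left; apply/eqP; rewrite -natr1; congr (_ * _)%R; ring.
have hJ2 k : exponential_prob lam (J2 k) <= (lam * eta)%:E.
  apply: (le_trans (exp_prob_itv l0 _)).
    by rewrite ltrD2l ltr_pM2r// ltr_nat.
  by rewrite lee_fin le_eqVlt; apply/orP; left; apply/eqP; rewrite -natr1; congr (_ * _)%R; ring.
have le1 : P U1 <= (lam * eta)%:E.
  apply: (union_bound _ pp) => //; first by rewrite mulr_ge0// ltW.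
  - by move=> k; exact: measurable_itv.
  - by move=> k; exact: measurable_itv.
  - exact: itv_disj1.
have le2 : P U2 <= (lam * eta)%:E.
  apply: (union_bound _ pp) => //; first by rewrite mulr_ge0// ltW.
  - by move=> k; exact: measurable_itv.
  - by move=> k; exact: measurable_itv.
  - exact: itv_disj2.
have mU1 : measurable U1.
  apply: bigcup_measurable => k _; apply: measurableI; apply: pre_meas;
  by [exact: mX|exact: gap_meas|exact: measurable_itv].
have mU2 : measurable U2.
  apply: bigcup_measurable => k _; apply: measurableI; apply: pre_meas;
  by [exact: mX|exact: gap_meas|exact: measurable_itv].
have cover : X j.+1 @^-1` [set x] `<=` U1 `|` U2.
  move=> w /= xw.
  have gE : gap X j.+1 w = (x - X j w)%R by rewrite /= xw.
  have [y0|y0] := leP 0%R (X j w).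
    left; pose k := Num.truncn (X j w / eta).
    have /andP[k1 k2] := Num.Theory.truncn_itv (divr_ge0 y0 (ltW e0)).
    move: k1 k2; rewrite ler_pdivlMr// ltr_pdivrMr// => k1 k2.
    exists k => //; split; rewrite /I1 /J1 /= in_itv/= ?gE; apply/andP; split; lra.
  right; pose k := Num.truncn (- X j w / eta).
  have ny : (0 <= - X j w)%R by rewrite oppr_ge0 ltW.
  have /andP[k1 k2] := Num.Theory.truncn_itv (divr_ge0 ny (ltW e0)).
  move: k1 k2; rewrite ler_pdivlMr// ltr_pdivrMr// => k1 k2.
  exists k => //; split; rewrite /I2 /J2 /= in_itv/= ?gE; apply/andP; split; lra.
apply: (le_trans (le_measure _ _ _ cover)); rewrite ?inE//; first exact: measurableU.
apply: (le_trans (measureU2 _ mU1 mU2)).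
apply: (le_trans (leeD le1 le2)); rewrite -EFinD lee_fin; lra.
Qed.

Lemma bool_meas d (T : measurableType d) (R : realType) (b : T -> bool) :
  measurable [set w | b w] -> measurable_fun setT (fun w => ((b w)%:R)%:E : \bar R).
Proof.
move=> mS.
have -> : (fun w => ((b w)%:R)%:E : \bar R) = EFin \o (\1_[set w | b w] : T -> R).
  apply/funext => w /=; rewrite indicE; congr ((nat_of_bool _)%:R%:E).
  by apply/idP/idP => [h|/set_mem //]; exact: mem_set.
apply/measurable_EFinP; exact: measurable_indic.
Qed.

Lemma expe_meas d (T : measurableType d) (R : realType) (f : T -> \bar R) m :
  measurable_fun setT f -> measurable_fun setT (fun w => f w ^+ m).
Proof.
move=> mf; elim: m => [|m IH].
  by under eq_fun do rewrite expe0; exact: measurable_cst.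
under eq_fun do rewrite expeS; exact: emeasurable_funM.
Qed.

Lemma beta0_meas d (T : measurableType d) (R : realType) (X : nat -> T -> R) eps x :
  (forall n, measurable_fun setT (X n)) -> measurable_fun setT (beta0 eps X x).
Proof.
move=> mX.
have -> : beta0 eps X x = (fun w => \sum_(i <oo | i \in xpredT)
   (((((eps < X i.+1 w - X i w)%R && (X i w + eps <= x)%R))%:R)%:E : \bar R)).
  by apply/funext => w; apply: eq_eseriesl.
apply: ge0_emeasurable_sum; first by move=> k w _ _; rewrite lee_fin.
move=> k _; apply: bool_meas.
have -> : [set w | ((eps < X k.+1 w - X k w)%R && (X k w + eps <= x)%R)] =
   gap X k.+1 @^-1` `]eps, +oo[ `&` X k @^-1` `]-oo, (x - eps)%R].
  apply/seteqP; split => w /=.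
    by move=> /andP[h1 h2]; rewrite !in_itv/= h1 lerBrDr h2.
  by rewrite !in_itv/= andbT lerBrDr => -[-> ->].
apply: measurableI; apply: pre_meas => //; first exact: gap_meas.
Qed.

Lemma count_meas d (T : measurableType d) (R : realType) (X : nat -> T -> R) x :
  (forall n, measurable_fun setT (X n)) -> measurable_fun setT (count_pts X x).
Proof.
move=> mX.
have -> : count_pts X x = (fun w => \sum_(i <oo | i \in xpredT)
   (((((X i w <= x)%R))%:R)%:E : \bar R)).
  by apply/funext => w; apply: eq_eseriesl.
apply: ge0_emeasurable_sum; first by move=> k w _ _; rewrite lee_fin.
move=> k _; apply: bool_meas.
have -> : [set w | (X k w <= x)%R] = X k @^-1` `]-oo, x].
  by apply/seteqP; split => w /=; rewrite !in_itv/=.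
by apply: pre_meas => //; exact: mX.
Qed.

Local Close Scope ereal_scope.

Theorem lemma2 (d : measure_display) (T : measurableType d) (R : realType)
  (P : probability T R) (lam : R) (X : nat -> T -> R) (m : nat) (x : R) :
  0 < lam -> poisson_process P lam X -> (0 < m)%N -> 0 < x ->
  (fun eps : R => (\int[P]_w (beta0 eps X x w ^+ m))%E)
    @ 0^'+ --> (\int[P]_w (count_pts X x w ^+ m))%E.
Proof.
Local Open Scope ereal_scope.
move=> l0 pp m0 x0; have [mX _ hexp] := pp.
set F := fun eps : R => \int[P]_w (beta0 eps X x w ^+ m).
set l := \int[P]_w (count_pts X x w ^+ m).
have mb eps : measurable_fun setT (fun w => beta0 eps X x w ^+ m).
  by apply: expe_meas; exact: beta0_meas.
have mc : measurable_fun setT (fun w => count_pts X x w ^+ m).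
  by apply: expe_meas; exact: count_meas.
have Fle eps : (0 < eps)%R -> F eps <= l.
  move=> e0; apply: ge0_le_integral => //.
  - by move=> w _; apply: expe_ge0; exact: beta0_ge0.
  - move=> w _; apply: expe_le; first exact: beta0_ge0.
    exact: beta0_le_count.
pose g k w := beta0 (epsk R k) X x w ^+ m.
have g0 k w : 0 <= g k w by apply: expe_ge0; exact: beta0_ge0.
have ndg w : nondecreasing_seq (g ^~ w).
  move=> i j ij; apply: expe_le; first exact: beta0_ge0.
  by apply: beta0_anti; exact: epsk_anti.
have mcv := @cvg_monotone_convergence d T R P setT measurableT g (fun k => mb _)
  (fun k w _ => g0 k w) (fun w _ => ndg w).
have mlim : measurable_fun setT (fun w => limn (g ^~ w)).
  apply: (emeasurable_fun_cvg g) => [k|w _]; first exact: mb.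
  exact: ereal_nondecreasing_is_cvgn.
have ae : (fun w => limn (g ^~ w)) = (fun w => count_pts X x w ^+ m) %[ae P].
  pose N := \bigcup_n (gap X n.+1 @^-1` `]-oo, 0%R] `|` X n @^-1` [set x]).
  apply: (@negligibleS _ _ _ P N).
    move=> w /= nQ; apply: contrapT => nN; apply: nQ => _.
    have gp n : (0 < X n.+1 w - X n w)%R.
      rewrite ltNge; apply/negP => h; apply: nN; exists n => //; left.
      by rewrite /= in_itv/=.
    have nx n : X n w != x.
      by apply/negP => /eqP h; apply: nN; exists n => //; right.
    apply: cvg_lim => //; apply: (@nd_cvg_expe R (fun k => beta0 (epsk R k) X x w)).
    - by move=> k; exact: beta0_ge0.
    - by move=> i j ij; apply: beta0_anti; exact: epsk_anti.
    - exact: beta0_cvg_good.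
  apply: negligible_bigcup => n; apply: negligibleU.
  - apply/negligibleP; first by apply: pre_meas => //; exact: gap_meas.
    have mI : measurable (`]-oo, 0%R] : set R) by exact: measurable_itv.
    apply: (eq_trans (hexp n.+1 _ mI)); apply: (exp_prob_null (a := 0%R) l0) => //.
    by move=> y [/=]; rewrite !in_itv/= andbT => h1 h2; apply/eqP; rewrite eq_le h1 h2.
  - apply/negligibleP; first by apply: pre_meas => //; exact: mX.
    exact: (@X_atomless d T R P lam X n x l0 pp).
have seqcv : (fun k => F (epsk R k)) @ \oo --> l.
  rewrite /l -(ae_eq_integral _ _ measurableT mlim mc ae).
  exact: mcv.
have nonincr : {in `]0%R, +oo[ &, nonincreasing_fun F}.
  move=> a b; rewrite !in_itv/= !andbT => a0 b0 ab.
  apply: ge0_le_integral => //.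
  - by move=> w _; apply: expe_ge0; exact: beta0_ge0.
  - by move=> w _; apply: expe_le; [exact: beta0_ge0|exact: beta0_anti].
have := @nonincreasing_at_right_cvge R F 0%R (BInfty _ false) isT nonincr.
suff -> : ereal_sup (F @` [set` Interval (BRight 0%R) (BInfty R false)]) = l by [].
apply/eqP; rewrite eq_le; apply/andP; split.
  apply: ub_ereal_sup => _ [e /= he <-]; apply: Fle.
  by move: he; rewrite in_itv/= andbT.
apply: (cvge_le _ seqcv); apply: nearW => k.
apply: ereal_sup_ubound; exists (epsk R k) => //=.
by rewrite in_itv/= andbT epsk_gt0.
Qed.
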